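(* Let $p,q>1$ and $t>2$, and let $u,v$ be weights on $\mathbb{R}$. Suppose that for every interval $I=(a,b)$, with $l_{I}=b-a$, \[ \left(\frac{1}{l_{I}/t}\int_{a}^{a+\frac{l_{I}}{t}}v^{q}\right)^{\frac{1}{q}}\left(\frac{1}{l_{I}/t}\int_{b-\frac{l_{I}}{t}}^{b}u^{-p'}\right)^{\frac{1}{p'}}\leq K. \] Then \[ \sup_{a<b<c}\left(\frac{v^{q}(a,b)}{c-a}\right)^{\frac{1}{q}}\left(\frac{u^{-p'}(b,c)}{c-a}\right)^{\frac{1}{p'}}\leq K. \]
   Context: A weight is a non-negative locally integrable function on $\mathbb{R}$. For a weight $\sigma$ and an interval $(a,b)$, $\sigma(a,b)=\int_{a}^{b}\sigma$; in particular $v^{q}(a,b)=\int_a^b v^q$ and $u^{-p'}(b,c)=\int_b^c u^{-p'}$. Here $p'=p/(p-1)$. *)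

(* Defs.v *)
From HB Require Import structures.
From mathcomp Require Import all_boot all_order all_algebra.
From mathcomp Require Import all_classical all_reals all_analysis.
Set Implicit Arguments. Unset Strict Implicit. Unset Printing Implicit Defensive.
Import Order.TTheory GRing.Theory Num.Theory.
Local Open Scope classical_set_scope.
Local Open Scope ring_scope.

Definition weight {R : realType} (w : R -> R) : Prop :=
  (forall x, 0 <= w x) /\
  (forall a b : R, (lebesgue_measure : measure _ R).-integrable `[a, b] (fun x => (w x)%:E)).

Definition wint {R : realType} (w : R -> R) (a b : R) : R :=
  fine (\int[lebesgue_measure]_(x in `]a, b[) (w x)%:E)%E.

Definition conj_exp {R : realType} (p : R) : R := p / (p - 1).

(* Main.v *)
Require Import Defs.
From HB Require Import structures.
From mathcomp Require Import all_boot all_order all_algebra.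
From mathcomp Require Import all_classical all_reals all_analysis.
From mathcomp Require Import ring lra.
Import Order.TTheory GRing.Theory Num.Theory numFieldNormedType.Exports.
Local Open Scope classical_set_scope.
Local Open Scope ring_scope.

Section S.
Context {R : realType}.
Local Notation mu := (@lebesgue_measure R).
Local Notation PI := (parameterized_integral mu).

Lemma wint_diff (w : R -> R) : weight w -> forall a x y : R, a <= x -> x <= y ->
  wint w x y = PI a y w - PI a x w.
Proof.
move=> [w0 wi] a x y ax xy.
change (\int[mu]_(z in `]x, y[) w z = PI a y w - PI a x w).
rewrite /parameterized_integral.
rewrite (@Rintegral_itvB _ w (BLeft a) (BRight y) x); last 3 first.
- exact: wi.
- by rewrite bnd_simp.
- by rewrite bnd_simp.
rewrite Rintegral_itv_bndo_bndc //.
apply: integrableS (wi x y) => //; apply: subset_itv; by rewrite bnd_simp.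
Qed.

Lemma wint_ge0 (w : R -> R) : weight w -> forall x y, 0 <= wint w x y.
Proof.
move=> [w0 wi] x y.
change (0 <= \int[mu]_(z in `]x, y[) w z).
by apply: Rintegral_ge0 => z _.
Qed.

Lemma PI_cont (w : R -> R) : weight w -> forall a c : R, a <= c ->
  {within `[a, c], continuous (fun x : R => PI a x w)}.
Proof.
move=> [w0 wi] a c ac; exact: (parameterized_integral_continuous ac (wi a c)).
Qed.

Lemma PI_a (w : R -> R) a : PI a a w = 0.
Proof. by rewrite /parameterized_integral set_itv1 Rintegral_set1. Qed.

Lemma within_lin (A : set R) (k a0 : R) (F : R -> R) :
  {within A, continuous F} ->
  {within A, continuous (fun y : R => F y - k * (y - a0))}.
Proof.
move=> cF.
have cL : {within A, continuous (fun y : R => k * (y - a0))}.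
  apply: continuous_subspaceT => y.
  apply: cvgM; first exact: cvg_cst.
  apply: cvgB; [exact: cvg_id | exact: cvg_cst].
move=> y; exact: (cvgB (cF y) (cL y)).
Qed.

Lemma within_lin2 (A : set R) (k a0 : R) (F : R -> R) :
  {within A, continuous F} ->
  {within A, continuous (fun y : R => k * (y - a0) - F y)}.
Proof.
move=> cF.
have cL : {within A, continuous (fun y : R => k * (y - a0))}.
  apply: continuous_subspaceT => y.
  apply: cvgM; first exact: cvg_cst.
  apply: cvgB; [exact: cvg_id | exact: cvg_cst].
move=> y; exact: (cvgB (cL y) (cF y)).
Qed.

End S.

Theorem lemma2p6 (R : realType) (p q t K : R) (u v : R -> R) :
  1 < p -> 1 < q -> 2 < t ->
  weight u -> weight v ->
  weight (fun x => v x `^ q) ->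
  {ae lebesgue_measure, forall x, 0 < u x} ->
  weight (fun x => u x `^ (- conj_exp p)) ->
  (forall a b : R, a < b ->
     let l := b - a in
     (wint (fun x => v x `^ q) a (a + l / t) / (l / t)) `^ (q^-1) *
     (wint (fun x => u x `^ (- conj_exp p)) (b - l / t) b / (l / t))
        `^ ((conj_exp p)^-1) <= K) ->
  forall a b c : R, a < b -> b < c ->
    (wint (fun x => v x `^ q) a b / (c - a)) `^ (q^-1) *
    (wint (fun x => u x `^ (- conj_exp p)) b c / (c - a)) `^ ((conj_exp p)^-1)
      <= K.
Proof.
move=> p1 q1 t2 _ _ wf _ wg Hyp a b c ab bc.
set f := (fun x => v x `^ q) in wf Hyp *.
set g := (fun x => u x `^ (- conj_exp p)) in wg Hyp *.
clearbody f g.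
have e1gt0 : 0 < q^-1 by rewrite invr_gt0 (lt_trans ltr01).
have e2gt0 : 0 < (conj_exp p)^-1.
  rewrite invr_gt0 /conj_exp divr_gt0 ?subr_gt0 ?(lt_trans ltr01)//.
have K0 : 0 <= K.
  apply: le_trans (Hyp 0 1 ltr01); by rewrite mulr_ge0 ?powR_ge0.
have ac : a < c by apply: lt_trans bc.
set L := c - a.
have LE : L = c - a by [].
clearbody L.
have L0 : 0 < L by rewrite LE subr_gt0.
set α := wint f a b. set β := wint g b c.
have α0 : 0 <= α by apply: wint_ge0.
have β0 : 0 <= β by apply: wint_ge0.
have [αz|αp] := eqVneq α 0.
  by rewrite αz mul0r powR0 ?gt_eqF// mul0r.
have [βz|βp] := eqVneq β 0.
  by rewrite βz mul0r powR0 ?gt_eqF // mulr0.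
have {αp}αp : 0 < α by rewrite lt_neqAle eq_sym αp.
have {βp}βp : 0 < β by rewrite lt_neqAle eq_sym βp.
pose Fp y := parameterized_integral lebesgue_measure a y f.
pose Gp y := parameterized_integral lebesgue_measure a y g.
have Fd x y : a <= x -> x <= y -> wint f x y = Fp y - Fp x by apply: wint_diff.
have Gd x y : a <= x -> x <= y -> wint g x y = Gp y - Gp x by apply: wint_diff.
have Fa : Fp a = 0 by apply: PI_a.
have Ga : Gp a = 0 by apply: PI_a.
have cF : {within `[a, b], continuous Fp} by exact: (@PI_cont R f wf a b (ltW ab)).
have sbc : `[b, c] `<=` `[a, c] by apply: subset_itvr; rewrite bnd_simp ltW.
have cG : {within `[b, c], continuous Gp}.
  exact: (continuous_subspaceW sbc (@PI_cont R g wg a c (ltW ac))).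
have αE : α = Fp b by rewrite /α (Fd a b) ?Fa ?subr0// ltW.
have βE : β = Gp c - Gp b by rewrite /β (Gd b c) ?ltW.
clearbody α β Fp Gp.
have [λ λL] : exists λ, λ * L = α by exists (α / L); rewrite divfK ?gt_eqF.
have [μ μL] : exists μ, μ * L = β by exists (β / L); rewrite divfK ?gt_eqF.
have λE : α / L = λ by rewrite -λL mulfK ?gt_eqF.
have μE : β / L = μ by rewrite -μL mulfK ?gt_eqF.
rewrite λE μE.
have λ0 : 0 < λ by rewrite -λE divr_gt0.
have μ0 : 0 < μ by rewrite -μE divr_gt0.
have [xs xsab xsmin] := @EVT_min R (fun y => Fp y - λ * (y - a)) a b (ltW ab)
  (within_lin _ λ a _ cF).
move: xsab; rewrite in_itv /= => /andP[axs xsb].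
have H0 : Fp xs - λ * (xs - a) <= 0.
  by have := xsmin a; rewrite in_itv /= lexx ltW // Fa subrr mulr0 subr0; apply.
have λba : λ * (b - a) < α.
  by rewrite -λL ltr_pM2l // LE ltrD2r.
have xslt : xs < b.
  rewrite lt_neqAle xsb andbT; apply/negP => /eqP xsE.
  by move: H0; rewrite xsE -αE; lra.
have Hmin y : xs <= y -> y <= c -> Fp xs - λ * (xs - a) <= Fp y - λ * (y - a).
  move=> xy yc; have [yb|by'] := leP y b.
    by apply: xsmin; rewrite in_itv /= yb (le_trans axs xy).
  have h1 : Fp b <= Fp y.
    by rewrite -subr_ge0 -Fd ?wint_ge0 // ltW // (lt_trans ab).
  have h2 : λ * (y - a) <= λ * L by rewrite ler_pM2l // LE lerD2r.
  lra.
have [ys ysbc ysmin] := @EVT_min R (fun y => μ * (y - a) - Gp y) b c (ltW bc)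
  (within_lin2 _ μ a _ cG).
move: ysbc; rewrite in_itv /= => /andP[bys ysc].
have Jc : μ * (ys - a) - Gp ys <= μ * (c - a) - Gp c.
  by apply: ysmin; rewrite in_itv /= lexx ltW.
rewrite -LE in Jc.
have yslt : b < ys.
  rewrite lt_neqAle bys andbT; apply/negP => /eqP ysE.
  have h : 0 < μ * (b - a) by rewrite mulr_gt0 // subr_gt0.
  by move: Jc; rewrite -ysE; lra.
have Jmin y : a <= y -> y <= ys -> μ * (ys - a) - Gp ys <= μ * (y - a) - Gp y.
  move=> ay yys; have [by'|yb] := leP b y.
    by apply: ysmin; rewrite in_itv /= by' (le_trans yys ysc).
  have h1 : Gp y <= Gp b.
    by rewrite -subr_ge0 -Gd ?wint_ge0 // ltW.
  have h2 : 0 <= μ * (y - a) by rewrite mulr_ge0 ?subr_ge0 // ltW.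
  lra.
have t0 : 0 < t by apply: lt_trans t2.
have xy : xs < ys by apply: lt_trans yslt.
have := Hyp xs ys xy => /= hl.
have [s sE] : exists s, s = (ys - xs) / t by exists ((ys - xs) / t).
rewrite -sE in hl.
have s0 : 0 < s by rewrite sE divr_gt0 // subr_gt0.
have sle : s <= ys - xs.
  rewrite sE ler_pdivrMr //; apply: ler_peMr; first by rewrite subr_ge0 ltW.
  by apply: ltW; apply: le_lt_trans t2; rewrite ler1n.
have A1 : λ <= wint f xs (xs + s) / s.
  have h1 : xs <= xs + s by rewrite lerDl ltW.
  have h2 : xs + s <= c by apply: le_trans ysc; lra.
  rewrite ler_pdivlMr // Fd //.
  have := Hmin (xs + s) h1 h2.
  rewrite !mulrBr !mulrDr; lra.
have A2 : μ <= wint g (ys - s) ys / s.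
  have h1 : ys - s <= ys by lra.
  have h2 : a <= ys - s by lra.
  rewrite ler_pdivlMr // Gd //.
  have := Jmin (ys - s) h2 h1.
  rewrite !mulrBr; lra.
apply: le_trans hl; apply: ler_pM; rewrite ?powR_ge0 //.
  by apply: ge0_ler_powR; rewrite ?nnegrE ?(ltW e1gt0) ?(ltW λ0) ?(le_trans (ltW λ0) A1).
by apply: ge0_ler_powR; rewrite ?nnegrE ?(ltW e2gt0) ?(ltW μ0) ?(le_trans (ltW μ0) A2).
Qed.
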